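(* Let $u(x)$ be a Hastings–McLeod solution of the Painlevé II equation $u''(x)=2u(x)^3+xu(x)$, i.e. the solution with monodromy data $s_1=\pm\mathrm{i}$, $s_3=\mp\mathrm{i}$, $s_2=0$. Then for every $c\in\mathbb{R}$, $$\int_c^{+\infty}u(y)^2\,\mathrm{d}y+\int_{-\infty}^c\left(u(y)^2+\frac y2\right)\mathrm{d}y=\frac{c^2}{4}.$$
   Context: Monodromy data of Painlevé II: complex numbers $s_1,s_2,s_3$ with $s_1-s_2+s_3+s_1s_2s_3=0$. Let $\gamma_k=\mathrm{e}^{\mathrm{i}(2k-1)\pi/6}\mathbb{R}_+$, $k=1,\dots,6$, be rays oriented from $0$ to $\infty$, with jump matrices $S_1=\begin{pmatrix}1&0\\ s_1&1\end{pmatrix}$, $S_2=\begin{pmatrix}1&s_2\\0&1\end{pmatrix}$, $S_3=\begin{pmatrix}1&0\\ s_3&1\end{pmatrix}$, $S_4=\begin{pmatrix}1&-s_1\\0&1\end{pmatrix}$, $S_5=\begin{pmatrix}1&0\\ -s_2&1\end{pmatrix}$, $S_6=\begin{pmatrix}1&-s_3\\0&1\end{pmatrix}$. Let $\theta(\lambda;x)=\mathrm{i}(\tfrac43\lambda^3+x\lambda)$, $\sigma_3=\mathrm{diag}(1,-1)$. $\Psi(\lambda;x)$ is the $2\times2$ function analytic off $\cup_k\gamma_k$ with continuous boundary values, $\Psi_+=\Psi_-S_k$ on $\gamma_k$ ($+$ = left side), and $\Psi\mathrm{e}^{\theta\sigma_3}=I+O(1/\lambda)$ as $\lambda\to\infty$;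 then $u(x)=2\lim_{\lambda\to\infty}\lambda\Psi_{12}\mathrm{e}^{-\theta}$ solves Painlevé II, bijectively in the data, and is said to have monodromy data $(s_1,s_2,s_3)$. The Hastings–McLeod solutions are real and smooth on $\mathbb{R}$, with $u(x)=\mathrm{i}s_1\sqrt{-x/2}+O((-x)^{-5/2})$ as $x\to-\infty$ and $u(x)\approx\mathrm{i}s_1\mathrm{Ai}(x)$ as $x\to+\infty$. *)

(* Defs.v *)
From Stdlib Require Import Reals Lra.
From Coquelicot Require Import Coquelicot.
Open Scope R_scope.

Definition is_PII_solution (u u' : R -> R) : Prop :=
  forall x : R, is_derive u x (u' x) /\ is_derive u' x (2 * u x ^ 3 + x * u x).

(* Hastings-McLeod solution with sign eps = i*s1 (s1 = -i*eps, s3 = -s1 = i*eps,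
   s2 = 0), eps in {1,-1}:
   - as x -> -oo :  u(x) = eps * sqrt(-x/2) + O((-x)^(-5/2));
   - as x -> +oo :  u(x) ~ eps * Ai(x), stated via the classical asymptotic
     Ai(x) ~ x^(-1/4) exp(-(2/3) x^(3/2)) / (2 sqrt pi), i.e.
     u(x) * 2 sqrt(pi) x^(1/4) exp((2/3) x^(3/2)) -> eps. *)
Definition hastings_mcleod (u : R -> R) (eps : R) : Prop :=
  (eps = 1 \/ eps = -1) /\
  (exists u' : R -> R, is_PII_solution u u') /\
  (exists M K : R, K < 0 /\
     forall x : R, x <= K ->
       Rabs (u x - eps * sqrt (- x / 2)) <= M * Rpower (- x) (- 5 / 2)) /\
  is_lim (fun x => u x * (2 * sqrt PI * Rpower x (1 / 4)
                          * exp (2 / 3 * Rpower x (3 / 2))))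
         p_infty eps.

(* Main.v *)
Require Import Defs.
From Stdlib Require Import Reals Lra Psatz.
From Coquelicot Require Import Coquelicot.
Open Scope R_scope.

Lemma get_lim_pinf (f : R -> R) (l : R) : is_lim f p_infty l ->
  forall e, 0 < e -> exists N, forall x, N < x -> Rabs (f x - l) < e.
Proof. intros H e He. apply is_lim_spec in H. unfold is_lim' in H. destruct (H (mkposreal e He)) as [N HN].
  exists N; exact HN. Qed.

Lemma mk_lim_pinf f : (forall e, 0 < e -> exists N, forall x, N < x -> Rabs (f x) < e) ->
  filterlim f (Rbar_locally p_infty) (locally 0).
Proof. intros H. assert (is_lim f p_infty 0). { apply is_lim_spec. unfold is_lim'. intros e.
  destruct (H e (cond_pos e)) as [N HN]. exists N. intros x Hx. rewrite Rminus_0_r. auto. }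
  exact H0. Qed.

Lemma mk_lim_minf f : (forall e, 0 < e -> exists N, forall x, x < N -> Rabs (f x) < e) ->
  filterlim f (Rbar_locally m_infty) (locally 0).
Proof. intros H. assert (is_lim f m_infty 0). { apply is_lim_spec. unfold is_lim'. intros e.
  destruct (H e (cond_pos e)) as [N HN]. exists N. intros x Hx. rewrite Rminus_0_r. auto. }
  exact H0. Qed.

Lemma deriv_bound (u u' u'' : R -> R) (Hd : forall x, is_derive u x (u' x))
  (Hd2 : forall x, is_derive u' x (u'' x)) x h B :
  0 < h -> (forall y, x <= y <= x + h -> Rabs (u'' y) <= B) ->
  Rabs (u' x) * h <= Rabs (u (x+h) - u x) + B * h * h.
Proof.
  intros Hh HB.
  destruct (MVT_gen u x (x+h) u') as [c [Hc Hc']].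
  - intros; apply Hd.
  - intros y _; apply continuity_pt_filterlim; apply (ex_derive_continuous u). eexists; apply Hd.
  - rewrite Rmin_left in Hc by lra; rewrite Rmax_right in Hc by lra.
    destruct (MVT_gen u' x c u'') as [d [Hd' Hd'']].
    + intros; apply Hd2.
    + intros y _; apply continuity_pt_filterlim; apply (ex_derive_continuous u'). eexists; apply Hd2.
    + rewrite Rmin_left in Hd' by lra; rewrite Rmax_right in Hd' by lra.
      assert (Hb : Rabs (u'' d) <= B) by (apply HB; lra).
      assert (E : u' x * h = (u (x+h) - u x) - u'' d * (c - x) * h) by
        (rewrite Hc'; rewrite <- Hd''; ring_simplify; lra).
      assert (Rabs (u' x) * h = Rabs (u' x * h)) by (rewrite Rabs_mult, (Rabs_pos_eq h); lra).
      rewrite H, E.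
      eapply Rle_trans; [apply Rabs_triang|]. rewrite Rabs_Ropp.
      apply Rplus_le_compat_l. rewrite !Rabs_mult, (Rabs_pos_eq h), (Rabs_pos_eq (c-x)) by lra.
      assert (0 <= Rabs (u'' d)) by apply Rabs_pos.
      apply Rmult_le_compat_r; [lra|]. nra.
Qed.

Theorem mainTheorem9 (u : R -> R) (eps : R) (HM : hastings_mcleod u eps) (c : R) :
  exists I1 I2 : R,
    is_RInt_gen (fun y => u y ^ 2) (at_point c) (Rbar_locally p_infty) I1 /\
    is_RInt_gen (fun y => u y ^ 2 + y / 2) (Rbar_locally m_infty) (at_point c) I2 /\
    I1 + I2 = c ^ 2 / 4.
Proof.
  destruct HM as [Heps [[u' Hp] [[M [K [HK Has]]] Hlim]]].
  set (u'' := fun x => 2 * u x ^ 3 + x * u x).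
  assert (Hd : forall x, is_derive u x (u' x)) by (intro; apply Hp).
  assert (Hd2 : forall x, is_derive u' x (u'' x)) by (intro; apply Hp).
  assert (Hcu : forall x, continuous u x) by (intro x; apply (ex_derive_continuous u); eexists; apply Hd).
  assert (Hcu2 : forall x, continuous (fun y => u y ^ 2) x).
  { intro x. apply continuous_ext with (f := fun y => mult (u y) (u y)).
    intros; unfold mult; simpl; ring. apply (@continuous_mult _ R_AbsRing); apply Hcu. }
  set (H := fun x => u' x ^2 - u x ^4 - x * u x ^2).
  set (G := fun x => x ^ 2 / 4 - H x).
  assert (HdH : forall x, is_derive (fun x => - H x) x (u x ^2)).
  { intro x. unfold H. auto_derive.
    - repeat split; match goal with |- ex_derive (fun x0 => u' x0) _ => exists (u'' x); exact (Hd2 x) | |- ex_derive (fun x0 => u x0) _ => exists (u' x); exact (Hd x) | _ => idtac end.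
    - replace (Derive (fun x0 => u x0) x) with (u' x) by (symmetry; apply is_derive_unique; apply Hd).
      replace (Derive (fun x0 => u' x0) x) with (u'' x) by (symmetry; apply is_derive_unique; apply Hd2).
      unfold u''. ring. }
  assert (HdG : forall x, is_derive G x (u x ^2 + x / 2)).
  { intro x. unfold G, H. auto_derive.
    - repeat split; match goal with |- ex_derive (fun x0 => u' x0) _ => exists (u'' x); exact (Hd2 x) | |- ex_derive (fun x0 => u x0) _ => exists (u' x); exact (Hd x) | _ => idtac end.
    - replace (Derive (fun x0 => u x0) x) with (u' x) by (symmetry; apply is_derive_unique; apply Hd).
      replace (Derive (fun x0 => u' x0) x) with (u'' x) by (symmetry; apply is_derive_unique; apply Hd2).
      unfold u''. field. }
  assert (LA : filterlim (fun x => - H x) (Rbar_locally p_infty) (locally 0)).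
  { assert (Hg : forall x, 1 <= x -> x <= 2 * sqrt PI * Rpower x (1 / 4) * exp (2 / 3 * Rpower x (3 / 2))).
    { intros x Hx.
      assert (1 <= sqrt PI). { rewrite <- sqrt_1. apply sqrt_le_1_alt. pose proof PI2_3_2. lra. }
      assert (1 <= Rpower x (1/4)). { pose proof (Rle_Rpower x 0 (1/4) Hx ltac:(lra)) as E.
        rewrite Rpower_O in E by lra. exact E. }
      assert (x <= Rpower x (3/2)). { pose proof (Rle_Rpower x 1 (3/2) Hx ltac:(lra)) as E.
        rewrite Rpower_1 in E by lra. exact E. }
      pose proof (exp_ineq1_le (2/3 * Rpower x (3/2))).
      assert (0 <= 2 * sqrt PI * Rpower x (1/4) - 2) by nra.
      nra. }
    destruct (get_lim_pinf _ _ Hlim 1 Rlt_0_1) as [N0 HN0].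
    set (X := Rmax N0 1).
    assert (HX1 : 1 <= X) by apply Rmax_r.
    assert (HuX : forall x, X < x -> Rabs (u x) * x <= 2).
    { intros x Hx. assert (N0 < x) by (unfold X in Hx; pose proof (Rmax_l N0 1); lra).
      assert (1 <= x) by lra.
      specialize (HN0 x H0). pose proof (Hg x H1) as Hgx.
      set (g := 2 * sqrt PI * Rpower x (1 / 4) * exp (2 / 3 * Rpower x (3 / 2))) in *.
      assert (Rabs (u x * g) < 2).
      { pose proof (Rabs_triang_inv (u x * g) eps).
        assert (Rabs eps = 1) by (destruct Heps; subst; unfold Rabs; destruct Rcase_abs; lra).
        lra. }
      rewrite Rabs_mult, (Rabs_pos_eq g) in H2 by lra.
      pose proof (Rabs_pos (u x)). nra. }
    assert (Hu2X : forall y, X < y -> Rabs (u'' y) <= 18).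
    { intros y Hy. pose proof (HuX y Hy). assert (1 <= y) by lra.
      unfold u''. replace (2 * u y ^ 3 + y * u y) with (u y * (2 * u y ^ 2 + y)) by ring.
      rewrite Rabs_mult, (Rabs_pos_eq (2 * u y ^2 + y)) by nra.
      rewrite <- (pow2_abs (u y)). set (a := Rabs (u y)) in *. assert (0 <= a) by apply Rabs_pos.
      assert (a <= 2) by nra. assert (a * a <= 4) by nra. assert (a * a * a <= 8) by nra. nra. }
    assert (Hu'0 : forall e, 0 < e -> exists N, forall x, N < x -> Rabs (u' x) <= e).
    { intros e He. exists (Rmax X (288 / (e*e))). intros x Hx.
      pose proof (Rmax_l X (288/(e*e))); pose proof (Rmax_r X (288/(e*e))).
      set (h := e / 36).
      assert (Hh : 0 < h) by (unfold h; lra).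
      pose proof (deriv_bound u u' u'' Hd Hd2 x h 18 Hh (fun y Hy => Hu2X y ltac:(lra))) as DB.
      pose proof (HuX x ltac:(lra)) as A1. pose proof (HuX (x+h) ltac:(lra)) as A2.
      assert (Rabs (u (x + h) - u x) <= Rabs (u (x+h)) + Rabs (u x)).
      { unfold Rminus. eapply Rle_trans; [apply Rabs_triang|]. rewrite Rabs_Ropp. lra. }
      assert (288 <= x * (e*e)).
      { assert (288 / (e*e) * (e*e) = 288) by (field; lra).
        assert (0 < e * e) by nra. nra. }
      pose proof (Rabs_pos (u (x+h))). pose proof (Rabs_pos (u x)).
      assert (Rabs (u (x+h)) * x <= 2) by nra.
      destruct (Rle_lt_dec (Rabs (u' x)) e) as [Hle|Hlt]; auto. exfalso.
      assert (0 < (Rabs (u' x) - e) * (h * x)) by (apply Rmult_lt_0_compat; nra).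
      assert (Rabs (u' x) * h * x <= (Rabs (u (x + h) - u x) + 18 * h * h) * x)
        by (apply Rmult_le_compat_r; lra).
      unfold h in *. nra. }
    apply mk_lim_pinf. intros e He.
    set (d := Rmin 1 (e/3)).
    assert (Hd0 : 0 < d) by (unfold d; apply Rmin_pos; lra).
    destruct (Hu'0 d Hd0) as [N1 HN1].
    exists (Rmax (Rmax X N1) (30/e)). intros x Hx.
    pose proof (Rmax_l (Rmax X N1) (30/e)); pose proof (Rmax_r (Rmax X N1) (30/e)).
    pose proof (Rmax_l X N1); pose proof (Rmax_r X N1).
    pose proof (HN1 x ltac:(lra)) as HA. pose proof (HuX x ltac:(lra)) as Ha.
    assert (d <= 1) by apply Rmin_l. assert (d <= e/3) by apply Rmin_r.
    assert (30 < x * e). { assert (30 / e * e = 30) by (field; lra). nra. }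
    unfold H. replace (- (u' x ^ 2 - u x ^ 4 - x * u x ^ 2)) with
       (- (Rabs (u' x))^2 + (u x ^2)^2 + x * (Rabs (u x))^2)
      by (rewrite !pow2_abs; ring).
    set (A := Rabs (u' x)) in *. set (b := u x ^ 2).
    assert (Hb : Rabs (u x) ^2 = b) by (apply pow2_abs). rewrite Hb.
    assert (0 <= b) by (unfold b; nra).
    assert (0 <= A) by apply Rabs_pos.
    assert (1 <= x) by lra.
    assert (x * x * b <= 4).
    { rewrite <- Hb. assert (0 <= Rabs (u x) * x) by (apply Rmult_le_pos; [apply Rabs_pos|lra]).
      replace (x * x * Rabs (u x) ^ 2) with ((Rabs (u x) * x)^2) by ring. nra. }
    assert (x * b <= 4) by nra. assert (b <= 4) by nra.
    assert (x * (b * b) <= 16) by nra.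
    apply Rabs_def1; nra. }

  assert (LB : filterlim G (Rbar_locally m_infty) (locally 0)).
  { set (M1 := Rabs M).
    assert (HM1 : 0 <= M1) by apply Rabs_pos.
    set (K1 := Rmin K (-2)).
    assert (HK1 : K1 <= K /\ K1 <= -2) by (split; [apply Rmin_l | apply Rmin_r]).
    assert (Heps2 : eps * eps = 1) by (destruct Heps; subst; ring).
    assert (Habse : Rabs eps = 1) by (destruct Heps; subst; unfold Rabs; destruct Rcase_abs; lra).
    assert (Hdel : forall y, y <= K1 -> Rabs (u y - eps * sqrt (- y / 2)) * (y * y) <= M1).
    { intros y Hy. pose proof (Has y ltac:(lra)) as E.
      assert (HP : Rpower (- y) (-5/2) * (y * y) <= 1).
      { pose proof (Rle_Rpower (-y) (-5/2) (-2) ltac:(lra) ltac:(lra)) as E1.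
        replace (-2) with (- (INR 2)) in E1 by (simpl; ring).
        rewrite Rpower_Ropp, Rpower_pow in E1 by lra.
        assert (0 < (-y)^2) by nra.
        replace (y * y) with ((-y)^2) by ring.
        apply (Rmult_le_compat_r ((-y)^2)) in E1; [|lra].
        rewrite Rinv_l in E1 by lra. exact E1. }
      assert (0 < Rpower (- y) (-5/2)) by (unfold Rpower; apply exp_pos).
      assert (M <= M1) by apply Rle_abs.
      assert (0 <= y * y) by nra.
      assert (M * Rpower (- y) (-5/2) <= M1 * Rpower (- y) (-5/2)) by nra.
      assert (Rabs (u y - eps * sqrt (- y / 2)) * (y * y) <= M1 * Rpower (- y) (-5/2) * (y*y)) by nra.
      nra. }
    assert (Hs : forall y, y <= K1 -> sqrt (-y/2) * sqrt (-y/2) = -y/2 /\ 1 <= sqrt (-y/2) /\ sqrt (-y/2) <= -y).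
    { intros y Hy. assert (E : sqrt (-y/2) * sqrt (-y/2) = -y/2) by (apply sqrt_sqrt; lra).
      pose proof (sqrt_pos (-y/2)). split; [exact E|]. split; nra. }
    assert (D1 : forall y, y <= K1 -> Rabs (u y ^ 2 + y / 2) * (- y) <= 2 * M1 + M1 * M1).
    { intros y Hy. destruct (Hs y Hy) as [Es [Es1 Es2]]. pose proof (Hdel y Hy) as Hdy.
      set (s := sqrt (-y/2)) in *. set (dl := u y - eps * s) in *.
      assert (Eu : u y ^ 2 + y / 2 = 2 * eps * s * dl + dl * dl).
      { replace (u y) with (eps * s + dl) by (unfold dl; ring).
        replace (y/2) with (- (s * s)) by lra.
        replace ((eps*s+dl)^2) with (eps*eps*(s*s) + 2*eps*s*dl + dl*dl) by ring. rewrite Heps2. ring. }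
      set (D := Rabs dl) in *. assert (0 <= D) by apply Rabs_pos.
      assert (Rabs (u y ^ 2 + y / 2) <= 2 * s * D + D * D).
      { rewrite Eu. eapply Rle_trans; [apply Rabs_triang|].
        rewrite !Rabs_mult, Habse, (Rabs_pos_eq 2), (Rabs_pos_eq s) by lra. unfold D; lra. }
      assert (s * (-y) <= y * y) by nra.
      assert (-y <= y * y) by nra. assert (1 <= y * y) by nra.
      assert (-y <= y * y * (y * y)) by nra.
      assert (D * (y * y) * (D * (y * y)) <= M1 * M1) by (apply Rmult_le_compat; nra).
      assert (Rabs (u y ^ 2 + y / 2) * (-y) <= (2 * s * D + D * D) * (-y)) by (apply Rmult_le_compat_r; lra).
      assert (2 * s * D * (-y) <= 2 * M1) by nra.
      assert (D * D * (-y) <= M1 * M1) by nra.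
      nra. }
    set (K2 := Rmin K1 (-(M1 + 1))).
    assert (HK2 : K2 <= K1 /\ K2 <= -(M1+1)) by (split; [apply Rmin_l | apply Rmin_r]).
    assert (D2 : forall y, y <= K2 -> Rabs (u'' y) * (- y) <= 6 * M1).
    { intros y Hy. assert (Hy1 : y <= K1) by lra. destruct (Hs y Hy1) as [Es [Es1 Es2]].
      pose proof (Hdel y Hy1) as Hdy.
      set (s := sqrt (-y/2)) in *. set (dl := u y - eps * s) in *.
      assert (Eu : u y ^ 2 + y / 2 = 2 * eps * s * dl + dl * dl).
      { replace (u y) with (eps * s + dl) by (unfold dl; ring).
        replace (y/2) with (- (s * s)) by lra.
        replace ((eps*s+dl)^2) with (eps*eps*(s*s) + 2*eps*s*dl + dl*dl) by ring. rewrite Heps2. ring. }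
      set (D := Rabs dl) in *. assert (0 <= D) by apply Rabs_pos.
      assert (D <= 1).
      { assert (M1 + 1 <= y * y) by nra. destruct (Rle_lt_dec D 1); auto. nra. }
      assert (Rabs (u y ^ 2 + y / 2) <= 3 * s * D).
      { rewrite Eu. eapply Rle_trans; [apply Rabs_triang|].
        rewrite !Rabs_mult, Habse, (Rabs_pos_eq 2), (Rabs_pos_eq s) by lra. change (Rabs dl) with D. nra. }
      assert (Rabs (u y) <= 2 * s).
      { replace (u y) with (eps * s + dl) by (unfold dl; ring).
        eapply Rle_trans; [apply Rabs_triang|]. rewrite Rabs_mult, Habse, (Rabs_pos_eq s) by lra.
        unfold D in *; lra. }
      unfold u''. replace (2 * u y ^ 3 + y * u y) with (2 * u y * (u y ^ 2 + y / 2)) by field.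
      rewrite !Rabs_mult, (Rabs_pos_eq 2) by lra.
      pose proof (Rabs_pos (u y)). pose proof (Rabs_pos (u y ^ 2 + y / 2)).
      assert (Rabs (u y) * Rabs (u y ^ 2 + y / 2) <= 2 * s * (3 * s * D)) by (apply Rmult_le_compat; lra).
      assert (2 * s * (3 * s * D) = 3 * (-y) * D) by nra.
      nra. }
    assert (Hfin : forall d, 0 < d -> exists N, forall x, x < N ->
               Rabs (u' x) <= d /\ Rabs (u x ^ 2 + x / 2) <= d).
    { intros d Hd0.
      exists (Rmin (K2 - 1) (Rmin (-(2/(d*d))) (Rmin (-(30*M1/d)) (-((2*M1+M1*M1)/d))))).
      intros x Hx.
      pose proof (Rmin_l (K2 - 1) (Rmin (-(2/(d*d))) (Rmin (-(30*M1/d)) (-((2*M1+M1*M1)/d))))).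
      pose proof (Rmin_r (K2 - 1) (Rmin (-(2/(d*d))) (Rmin (-(30*M1/d)) (-((2*M1+M1*M1)/d))))).
      pose proof (Rmin_l (-(2/(d*d))) (Rmin (-(30*M1/d)) (-((2*M1+M1*M1)/d)))).
      pose proof (Rmin_r (-(2/(d*d))) (Rmin (-(30*M1/d)) (-((2*M1+M1*M1)/d)))).
      pose proof (Rmin_l (-(30*M1/d)) (-((2*M1+M1*M1)/d))).
      pose proof (Rmin_r (-(30*M1/d)) (-((2*M1+M1*M1)/d))).
      assert (Hx1 : 2 <= d * d * (-x)).
      { assert (2 / (d*d) * (d*d) = 2) by (field; lra). assert (0 < d*d) by nra. nra. }
      assert (Hx2 : 30 * M1 <= d * (-x)).
      { assert (30*M1 / d * d = 30*M1) by (field; lra). nra. }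
      assert (Hx3 : 2 * M1 + M1 * M1 <= d * (-x)).
      { assert ((2*M1+M1*M1) / d * d = 2*M1+M1*M1) by (field; lra). nra. }
      split.
      -
        set (B := 12 * M1 / (-x)).
        assert (HB : forall y, x <= y <= x + 1 -> Rabs (u'' y) <= B).
        { intros y Hy. pose proof (D2 y ltac:(lra)).
          unfold B. apply (Rmult_le_reg_r (-x)); [lra|].
          replace (12 * M1 / - x * - x) with (12 * M1) by (field; lra).
          pose proof (Rabs_pos (u'' y)).
          assert (-x <= 2 * (-y)) by lra. nra. }
        pose proof (deriv_bound u u' u'' Hd Hd2 x 1 B Rlt_0_1 HB) as DB.
        assert (Hx1' : x <= K1) by lra. assert (Hx2' : x + 1 <= K1) by lra.
        destruct (Hs x Hx1') as [Es [Es1 Es2]].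
        destruct (Hs (x+1) Hx2') as [Fs [Fs1 Fs2]].
        pose proof (Hdel x Hx1') as Hd1. pose proof (Hdel (x+1) Hx2') as Hd2'.
        set (s1 := sqrt (-x/2)) in *. set (s2 := sqrt (-(x+1)/2)) in *.
        set (D1' := Rabs (u x - eps * s1)) in *. set (D2' := Rabs (u (x+1) - eps * s2)) in *.
        assert (0 <= D1') by apply Rabs_pos. assert (0 <= D2') by apply Rabs_pos.
        assert (Hss : s2 <= s1) by nra.
        assert (Hss2 : (s1 - s2) * s1 <= 1/2) by nra.
        assert (Hu12 : Rabs (u (x + 1) - u x) <= (s1 - s2) + D1' + D2').
        { replace (u (x + 1) - u x) with ((u (x+1) - eps * s2) - (u x - eps * s1) + eps * (s2 - s1)) by ring.
          eapply Rle_trans; [apply Rabs_triang|].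
          rewrite Rabs_mult, Habse, (Rabs_left1 (s2 - s1)) by lra.
          unfold Rminus at 1. eapply Rle_trans; [apply Rplus_le_compat_r; apply Rabs_triang|].
          rewrite Rabs_Ropp. unfold D1', D2'. lra. }
        assert (Hsd : s1 - s2 <= d / 2).
        { assert (1 <= d * s1) by nra. nra. }
        assert (HD1 : D1' * (-x) <= M1) by nra.
        assert (HD2 : D2' * (-x) <= 2 * M1) by nra.
        assert (HBx : B * (-x) = 12 * M1) by (unfold B; field; lra).
        assert (Rabs (u' x) <= (s1 - s2) + D1' + D2' + B) by lra.
        assert ((D1' + D2' + B) * d * (-x) <= d * d * (-x) / 2) by nra.
        assert (D1' + D2' + B <= d / 2).
        { destruct (Rle_lt_dec (D1' + D2' + B) (d/2)); auto. assert (0 < d * (-x)) by nra. nra. }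
        lra.
      - pose proof (D1 x ltac:(lra)).
        pose proof (Rabs_pos (u x ^ 2 + x / 2)).
        destruct (Rle_lt_dec (Rabs (u x ^ 2 + x / 2)) d); auto. assert (0 < -x) by lra. nra. }
    apply mk_lim_minf. intros e He.
    set (d := Rmin 1 (e/3)).
    assert (Hd0 : 0 < d) by (unfold d; apply Rmin_pos; lra).
    assert (d <= 1) by apply Rmin_l. assert (d <= e/3) by apply Rmin_r.
    destruct (Hfin d Hd0) as [N HN]. exists N. intros x Hx.
    destruct (HN x Hx) as [HA Hw].
    unfold G, H. replace (x ^ 2 / 4 - (u' x ^ 2 - u x ^ 4 - x * u x ^ 2)) with
      ((Rabs (u x ^ 2 + x / 2))^2 - (Rabs (u' x))^2) by (rewrite !pow2_abs; field).
    pose proof (Rabs_pos (u' x)). pose proof (Rabs_pos (u x ^ 2 + x / 2)).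
    apply Rabs_def1; nra. }

  exists (H c), (G c). split; [|split].
  - eapply is_RInt_gen_ext; [ | replace (H c) with (0 - (- H c)) by ring; apply is_RInt_gen_Derive].
    + apply filter_forall. intros ab y _. apply is_derive_unique, HdH.
    + apply filter_forall. intros ab y _. eexists; apply HdH.
    + apply filter_forall. intros ab y _. apply (continuous_ext (fun y => u y ^ 2)).
      intros; symmetry; apply is_derive_unique, HdH. apply Hcu2.
    + intros P HP. exact (locally_singleton _ _ HP).
    + exact LA.
  - eapply is_RInt_gen_ext; [ | replace (G c) with (G c - 0) by ring; apply is_RInt_gen_Derive].
    + apply filter_forall. intros ab y _. apply is_derive_unique, HdG.
    + apply filter_forall. intros ab y _. eexists; apply HdG.
    + apply filter_forall. intros ab y _. apply (continuous_ext (fun y => u y ^ 2 + y / 2)).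
      intros; symmetry; apply is_derive_unique, HdG.
      apply (ex_derive_continuous (fun y => u y ^ 2 + y / 2)). auto_derive. repeat split; eexists; apply Hd.
    + exact LB.
    + intros P HP. exact (locally_singleton _ _ HP).
  - unfold G. ring.
Qed.
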